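(* Let $p\ge 4$ be an integer and let $T_1$ be the tree obtained from an induced path $a_1\text{-}a_2\text{-}\cdots\text{-}a_p$ by adding three new vertices $x,z,y$ and the edges $a_px$, $xz$ and $a_py$. For every integer $d\ge 1$ (and every such $T_1$) there exists a polynomial $f$ such that for every integer $t\ge 1$ the following holds: if $G$ is a paw-free graph that is $T_1$-free and does not contain $K_d(t)$ as a subgraph, then $\chi(G)\le f(t)$.
   Context: All graphs are finite and simple. $\chi(G)$ is the chromatic number of $G$. A graph is $H$-free if it has no induced subgraph isomorphic to $H$. The paw is the graph on four vertices consisting of a triangle together with one additional vertex adjacent to exactly one vertex of the triangle. For integers $d,t\ge1$, $K_d(t)$ denotes the complete $d$-partite graph in which each of the $d$ parts has exactly $t$ vertices; ''contains $K_d(t)$ as a subgraph'' means as a (not necessarily induced) subgraph. *)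

(* Defs.v *)
From mathcomp Require Import all_boot all_order all_algebra.
Set Implicit Arguments. Unset Strict Implicit. Unset Printing Implicit Defensive.

Definition simple_graph (V : finType) (e : rel V) : Prop :=
  symmetric e /\ irreflexive e.

Definition induced_sub (W V : finType) (h : rel W) (e : rel V) : Prop :=
  exists phi : W -> V, injective phi /\ forall a b, e (phi a) (phi b) = h a b.

Definition H_free (W V : finType) (h : rel W) (e : rel V) : Prop :=
  ~ induced_sub h e.

Definition paw_edge (a b : nat) : bool :=
  [|| (a == 0) && (b == 1), (a == 0) && (b == 2), (a == 1) && (b == 2)
    | (a == 2) && (b == 3)].
Definition paw : rel 'I_4 := fun a b => paw_edge a b || paw_edge b a.

(* T1(p): vertices 'I_(p+3); i < p is a_(i+1); p is x; p+1 is z; p+2 is y.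
   Edges: a_i a_(i+1), a_p x, x z, a_p y. *)
Definition T1_edge (p a b : nat) : bool :=
  [|| (b == a.+1) && (b < p),
      (a == p.-1) && (b == p),
      (a == p) && (b == p.+1)
    | (a == p.-1) && (b == p.+2)].
Definition T1 (p : nat) : rel 'I_(p + 3) :=
  fun a b => T1_edge p a b || T1_edge p b a.

Definition contains_Kdt (d t : nat) (V : finType) (e : rel V) : Prop :=
  exists phi : 'I_d * 'I_t -> V, injective phi /\
    forall u v : 'I_d * 'I_t, u.1 != v.1 -> e (phi u) (phi v).

Definition colorable (V : finType) (e : rel V) (k : nat) : bool :=
  [exists c : {ffun V -> 'I_k}, [forall x, forall y, e x y ==> (c x != c y)]].

Lemma colorable_card (V : finType) (e : rel V) :
  irreflexive e -> exists k, colorable e k.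
Proof.
move=> ir; exists #|V|; apply/existsP; exists [ffun x => enum_rank x].
apply/forallP => x; apply/forallP => y; apply/implyP => exy.
rewrite !ffunE; apply/negP => /eqP /enum_rank_inj exy'.
by move: exy; rewrite exy' ir.
Qed.

(* Chromatic number (for loopless graphs; 0 is a default otherwise). *)
Definition chi (V : finType) (e : rel V) : nat :=
  match boolP [forall x, ~~ e x x] with
  | AltTrue h => ex_minn (colorable_card (fun x => negbTE ((elimT forallP h) x)))
  | AltFalse _ => 0
  end.
Arguments T1 p : clear implicits.

(* Main.v *)
Require Import Defs.
From mathcomp Require Import all_boot all_order all_algebra zify.


Lemma T1L1 p i j : 3 <= p -> i < p -> j < p -> T1_edge p i j || T1_edge p j i = (i == j.+1) || (j == i.+1).
Proof. rewrite /T1_edge => *; lia. Qed.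
Lemma T1L2 p i : 3 <= p -> i < p -> (T1_edge p i p || T1_edge p p i = (i == p.-1)) /\ (T1_edge p p i || T1_edge p i p = (i == p.-1)).
Proof. rewrite /T1_edge => *; split; lia. Qed.
Lemma T1L3 p i : 3 <= p -> i < p -> (T1_edge p i p.+1 || T1_edge p p.+1 i = false) /\ (T1_edge p p.+1 i || T1_edge p i p.+1 = false).
Proof. rewrite /T1_edge => *; split; lia. Qed.
Lemma T1L4 p i : 3 <= p -> i < p -> (T1_edge p i p.+2 || T1_edge p p.+2 i = (i == p.-1)) /\ (T1_edge p p.+2 i || T1_edge p i p.+2 = (i == p.-1)).
Proof. rewrite /T1_edge => *; split; lia. Qed.
Lemma T1L5 p : 3 <= p -> [/\ T1_edge p p p || T1_edge p p p = false,
   T1_edge p p p.+1 || T1_edge p p.+1 p = true, T1_edge p p.+1 p || T1_edge p p p.+1 = true,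
   T1_edge p p p.+2 || T1_edge p p.+2 p = false & T1_edge p p.+2 p || T1_edge p p p.+2 = false].
Proof. rewrite /T1_edge => *; split; lia. Qed.
Lemma T1L6 p : 3 <= p -> [/\ T1_edge p p.+1 p.+1 || T1_edge p p.+1 p.+1 = false,
   T1_edge p p.+1 p.+2 || T1_edge p p.+2 p.+1 = false, T1_edge p p.+2 p.+1 || T1_edge p p.+1 p.+2 = false
   & T1_edge p p.+2 p.+2 || T1_edge p p.+2 p.+2 = false].
Proof. rewrite /T1_edge => *; split; lia. Qed.
Ltac nlia := repeat match goal with
  | H : ?T |- _ => lazymatch T with
                   | context [@Equality.sort] => clear H
                   | context [Finite.sort] => clear H
                   | is_true _ => fail
                   | @eq nat _ _ => fail
                   | @eq bool _ _ => fail
                   | not _ => fail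
                   | _ => clear H end
  end; lia.

Section G.
Variable V : finType.
Variable e : rel V.
Hypothesis esym : symmetric e.
Hypothesis eirr : irreflexive e.

Definition tfat x := forall y z, e x y -> e y z -> ~~ e x z.
Definition ipath (b : nat -> V) k :=
  (forall i j, i < k -> j < k -> e (b i) (b j) = (i == j.+1) || (j == i.+1)) /\
  (forall i j, i < k -> j < k -> b i = b j -> i = j).

Lemma t1_found p (b : nat -> V) X Y Z : 3 <= p -> ipath b p ->
  e X (b p.-1) -> e Y (b p.-1) -> e X Z -> ~~ e Z Y -> Z != b p.-1 ->
  (forall j, j < p.-1 -> [&& ~~ e X (b j), ~~ e Y (b j) & ~~ e Z (b j)]) ->
  tfat X -> induced_sub (T1 p) e.
Proof.
move=> hp [bE bI] Xb Yb XZ nZY nZb0 nb tfX.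
have nXY : ~~ e X Y by apply: (tfX (b p.-1)) => //; rewrite esym.
have nZb : ~~ e Z (b p.-1).
  by apply/negP => Zb; have := tfX _ _ XZ Zb; rewrite Xb.
have notin : forall W, (forall j, j < p.-1 -> ~~ e W (b j)) -> W != b p.-1 ->
    forall j, j < p -> W != b j.
  move=> W hW hW1 j hj; apply/eqP => E.
  have [jp|jp] := ltnP j p.-1; last first.
    have jE : j = p.-1 by nlia.
    by rewrite -jE -E eqxx in hW1.
  pose j' := if j == 0 then 1 else j.-1.
  have hj' : j' < p.-1 by rewrite /j'; case: ifP; nlia.
  have := hW _ hj'; rewrite E bE; [|nlia|rewrite /j'; case: ifP; nlia].
  by rewrite /j'; case: ifP; nlia.
have nXb : forall j, j < p -> X != b j.
  apply: notin; first by move=> j /nb /and3P[].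
  by apply/eqP => E; rewrite E eirr in Xb.
have nYb : forall j, j < p -> Y != b j.
  apply: notin; first by move=> j /nb /and3P[].
  by apply/eqP => E; rewrite E eirr in Yb.
have nZbj : forall j, j < p -> Z != b j.
  by apply: notin => // j /nb /and3P[].
have XY : X != Y by apply/eqP => E; rewrite -E esym XZ in nZY.
have XZn : X != Z by apply/eqP => E; rewrite E eirr in XZ.
have YZ : Y != Z by apply/eqP => E; rewrite -E Yb in nZb.
pose phi (i : 'I_(p + 3)) := if i < p then b i else if (i : nat) == p then X
   else if (i : nat) == p.+1 then Z else Y.
have reg : forall i : 'I_(p + 3), [|| i < p, (i : nat) == p, (i : nat) == p.+1 | (i : nat) == p.+2].
  by move=> [i hi] /=; nlia.
have phiB : forall i : 'I_(p+3), i < p -> phi i = b i by move=> i hi; rewrite /phi hi.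
have phiX : forall i : 'I_(p+3), (i : nat) = p -> phi i = X.
  by move=> i hi; rewrite /phi hi ltnn eqxx.
have phiZ : forall i : 'I_(p+3), (i : nat) = p.+1 -> phi i = Z.
  move=> i hi; have h1 : (p.+1 < p) = false by nlia.
  have h2: (p.+1 == p) = false by nlia.
  by rewrite /phi hi h1 h2 eqxx.
have phiY : forall i : 'I_(p+3), (i : nat) = p.+2 -> phi i = Y.
  move=> i hi; have h1 : (p.+2 < p) = false by nlia.
  have h2: (p.+2 == p) = false by nlia. have h3 : (p.+2 == p.+1) = false by nlia.
  by rewrite /phi hi h1 h2 h3.
have eBX : forall i, i < p -> e (b i) X = (i == p.-1).
  move=> i hi; case: eqP => [->|/eqP ne]; first by rewrite esym.
  have ip : i < p.-1 by nlia.
  by case/and3P: (nb i ip) => h _ _; rewrite esym (negbTE h).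
have eBY : forall i, i < p -> e (b i) Y = (i == p.-1).
  move=> i hi; case: eqP => [->|/eqP ne]; first by rewrite esym.
  have ip : i < p.-1 by nlia.
  by case/and3P: (nb i ip) => _ h _; rewrite esym (negbTE h).
have eBZ : forall i, i < p -> e (b i) Z = false.
  move=> i hi; have [ip|ip] := ltnP i p.-1.
    by case/and3P: (nb i ip) => _ _ h; rewrite esym (negbTE h).
  have iE : i = p.-1 by nlia.
  by rewrite iE esym (negbTE nZb).
exists phi; split.
  move=> i j; apply: contra_eq => /negP nij.
  case/or4P: (reg i) => [hi|/eqP hi|/eqP hi|/eqP hi];
  case/or4P: (reg j) => [hj|/eqP hj|/eqP hj|/eqP hj];
  rewrite ?(phiB _ hi) ?(phiX _ hi) ?(phiZ _ hi) ?(phiY _ hi)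
    ?(phiB _ hj) ?(phiX _ hj) ?(phiZ _ hj) ?(phiY _ hj);
  apply/eqP => E; apply: nij; apply/eqP; apply: ord_inj.
  - exact: bI _ _ hi hj E.
  - by move: (nXb _ hi); rewrite E eqxx.
  - by move: (nZbj _ hi); rewrite E eqxx.
  - by move: (nYb _ hi); rewrite E eqxx.
  - by move: (nXb _ hj); rewrite E eqxx.
  - by rewrite hi hj.
  - by move: XZn; rewrite E eqxx.
  - by move: XY; rewrite E eqxx.
  - by move: (nZbj _ hj); rewrite E eqxx.
  - by move: XZn; rewrite E eqxx.
  - by rewrite hi hj.
  - by move: YZ; rewrite E eqxx.
  - by move: (nYb _ hj); rewrite E eqxx.
  - by move: XY; rewrite E eqxx.
  - by move: YZ; rewrite E eqxx.
  - by rewrite hi hj.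
have [L51 L52 L53 L54 L55] := T1L5 _ hp.
have [L61 L62 L63 L64] := T1L6 _ hp.
have eXb : forall j, j < p -> e X (b j) = (j == p.-1) by move=> *; rewrite esym eBX.
have eYb : forall j, j < p -> e Y (b j) = (j == p.-1) by move=> *; rewrite esym eBY.
have eZb : forall j, j < p -> e Z (b j) = false by move=> *; rewrite esym eBZ.
move=> i j; rewrite /T1.
case/or4P: (reg i) => [hi|/eqP hi|/eqP hi|/eqP hi];
case/or4P: (reg j) => [hj|/eqP hj|/eqP hj|/eqP hj];
rewrite ?(phiB _ hi) ?(phiX _ hi) ?(phiZ _ hi) ?(phiY _ hi)
    ?(phiB _ hj) ?(phiX _ hj) ?(phiZ _ hj) ?(phiY _ hj) ?hi ?hj.
- by rewrite T1L1 // bE.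
- by rewrite (T1L2 _ _ hp hi).1 eBX.
- by rewrite (T1L3 _ _ hp hi).1 eBZ.
- by rewrite (T1L4 _ _ hp hi).1 eBY.
- by rewrite (T1L2 _ _ hp hj).2 eXb.
- by rewrite L51 eirr.
- by rewrite L52 XZ.
- by rewrite L54 (negbTE nXY).
- by rewrite (T1L3 _ _ hp hj).2 eZb.
- by rewrite L53 esym XZ.
- by rewrite L61 eirr.
- by rewrite L62 (negbTE nZY).
- by rewrite (T1L4 _ _ hp hj).2 eYb.
- by rewrite L55 esym (negbTE nXY).
- by rewrite L63 esym (negbTE nZY).
- by rewrite L64 eirr.
Qed.
End G.


Lemma connect_indP (T : finType) (r : rel T) (P : T -> Prop) x :
  P x -> (forall u v, P u -> r u v -> P v) -> forall y, connect r x y -> P y.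
Proof.
move=> Px st y /connectP [s ps ->]; elim: s x Px ps => [|z s IH] x Px //= /andP [rxz ps].
exact: IH (st _ _ Px rxz) ps.
Qed.

Section G2.
Variable V : finType.
Variable e : rel V.
Hypothesis esym : symmetric e.
Hypothesis eirr : irreflexive e.

Definition colS (S : {set V}) k := exists c : V -> nat,
  (forall x, x \in S -> c x < k) /\ (forall x y, x \in S -> y \in S -> e x y -> c x != c y).

Lemma paw_found a b c w : e a b -> e a c -> e b c -> e w c -> ~~ e w a -> ~~ e w b ->
  induced_sub paw e.
Proof.
move=> ab ac bc wc nwa nwb.
have wa : w != a by apply/eqP => E; rewrite E ab in nwb.
have wb : w != b by apply/eqP => E; rewrite E esym ab in nwa.
have wc' : w != c by apply/eqP => E; rewrite E eirr in wc.
have ab' : a != b by apply/eqP => E; rewrite E eirr in ab.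
have ac' : a != c by apply/eqP => E; rewrite E eirr in ac.
have bc' : b != c by apply/eqP => E; rewrite E eirr in bc.
exists (fun i : 'I_4 => nth a [:: a; b; c; w] i); split.
  move=> [[|[|[|[|i]]]] hi] [[|[|[|[|j]]]] hj] //= E; apply: ord_inj => //=;
  move: E ab' ac' bc' wa wb wc'; try (by move=> ->; rewrite eqxx);
  try (by move=> ->; rewrite !eqxx ?andbF);
  by move=> E; rewrite E eqxx.
move=> [[|[|[|[|i]]]] hi] [[|[|[|[|j]]]] hj] //=; rewrite /paw /paw_edge /= ?eirr //;
  by rewrite ?ab ?ac ?bc ?wc ?(negbTE nwa) ?(negbTE nwb) // esym ?ab ?ac ?bc ?wc ?(negbTE nwa) ?(negbTE nwb).
Qed.

Lemma nbhd_col d t v : ~ induced_sub paw e -> ~ contains_Kdt d t e ->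
  colS [set u | e v u] (d * t).
Proof.
move=> pawf nK; set N := [set u | e v u].
have trans : forall x y z, x \in N -> y \in N -> z \in N -> ~~ e x y -> ~~ e y z -> ~~ e x z.
  move=> x y z; rewrite !inE => vx vy vz nxy nyz; apply/negP => xz; apply: pawf.
  by apply: (@paw_found x z v y); rewrite // 1?esym // esym.
pose rep u := odflt u [pick y in N | ~~ e u y].
have repP : forall u, u \in N -> rep u \in N /\ ~~ e u (rep u).
  move=> u uN; rewrite /rep; case: pickP => [y /andP[]//|H].
  by have := H u; rewrite uN eirr.
have repE : forall u u', u \in N -> u' \in N -> ~~ e u u' -> rep u = rep u'.
  move=> u u' uN u'N nuu; rewrite /rep.
  have -> : [pick y in N | ~~ e u y] = [pick y in N | ~~ e u' y]; last first.
    by case: pickP => // H; have := H u'; rewrite u'N eirr.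
  apply: eq_pick => y /=.
  case yN: (y \in N) => //=; apply/idP/idP => h.
    by apply: (trans u' u y) => //; rewrite esym.
  exact: (trans u u' y).
have repN : forall u u', u \in N -> u' \in N -> e u u' -> rep u != rep u'.
  move=> u u' uN u'N uu; apply/eqP => E.
  have [rN h1] := repP u uN; have [_ h2] := repP u' u'N.
  by move: (trans u (rep u) u' uN rN u'N h1); rewrite E esym h2 uu => /(_ isT).
set R := [set rep u | u in N].
have RN : forall r, r \in R -> r \in N /\ rep r = r.
  move=> r /imsetP [u uN ->]; have [rN h] := repP u uN.
  by split => //; symmetry; apply: repE.
have clique : forall r1 r2, r1 \in R -> r2 \in R -> r1 != r2 -> e r1 r2.
  move=> r1 r2 r1R r2R; apply: contraNT => ne.
  have [r1N E1] := RN _ r1R; have [r2N E2] := RN _ r2R.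
  by rewrite -E1 -E2 (repE r1 r2).
have cR : #|R| < d * t.
  rewrite ltnNge; apply/negP => big; apply: nK.
  have hsz : forall u : 'I_d * 'I_t, enum_rank u < size (enum R).
    move=> u; rewrite -cardE; apply: leq_trans big.
    by apply: (leq_trans (ltn_ord _)); rewrite card_prod !card_ord.
  exists (fun u => nth v (enum R) (enum_rank u)); split.
    move=> u u' /eqP; rewrite nth_uniq ?enum_uniq ?hsz // => /eqP E.
    by apply: enum_rank_inj; apply: ord_inj.
  move=> u u' ne; apply: clique; try (by rewrite -mem_enum; apply: mem_nth).
  rewrite nth_uniq ?enum_uniq ?hsz //; apply: contra ne => /eqP E.
  by have -> : u = u' by apply: enum_rank_inj; apply: ord_inj.
exists (fun u => index (rep u) (enum R)); split.
  move=> x xN; apply: leq_trans cR; rewrite ltnS; apply: ltnW.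
  by rewrite cardE index_mem mem_enum imset_f.
move=> x y xN yN xy; apply/eqP => E.
have := repN x y xN yN xy; rewrite -(nth_index v (s := enum R) (x := rep x)) ?mem_enum ?imset_f //.
by rewrite E nth_index ?mem_enum ?imset_f // eqxx.
Qed.

Lemma tri_comp d t (C : {set V}) x y z : ~ induced_sub paw e -> ~ contains_Kdt d t e ->
  e x y -> e y z -> e x z -> (forall u, u \in C -> connect e x u) ->
  colS C (d * t + d * t).
Proof.
move=> pawf nK xy yz xz Cc.
pose adj2 v := [|| e x v && e y v, e x v && e z v | e y v && e z v].
have A : forall v, [|| e v x, e v y | e v z] -> adj2 v.
  move=> v; rewrite /adj2 ![e _ v]esym.
  case vx: (e v x); case vy: (e v y); case vz: (e v z) => //= _; exfalso; apply: pawf.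
  - by apply: (@paw_found y z x v); rewrite ?vx ?vy ?vz // esym.
  - by apply: (@paw_found x z y v); rewrite ?vx ?vy ?vz // esym.
  - by apply: (@paw_found x y z v); rewrite ?vx ?vy ?vz.
pose Q u := [|| u == x, u == y, u == z | adj2 u].
have step : forall u v, Q u -> e u v -> Q v.
  move=> u v Qu uv; case h: [|| e v x, e v y | e v z].
    by rewrite /Q (A v h) !orbT.
  exfalso; move: h; case/or4P: Qu => [/eqP Eu|/eqP Eu|/eqP Eu|];
    try (by rewrite Eu esym in uv; rewrite uv ?orbT).
  case/or3P => /andP [h1 h2] /negbT; rewrite !negb_or => /and3P [n1 n2 n3]; apply: pawf.
  - by apply: (@paw_found x y u v); rewrite // esym.
  - by apply: (@paw_found x z u v); rewrite // esym.
  - by apply: (@paw_found y z u v); rewrite // esym.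
have xy_adj : forall u, u \in C -> e x u || e y u.
  move=> u /Cc; move/(@connect_indP V e Q x); rewrite /Q eqxx => /(_ isT step).
  case/or4P => [/eqP->|/eqP->|/eqP->|].
  - by rewrite esym xy orbT.
  - by rewrite xy.
  - by rewrite xz.
  by rewrite /adj2 => /or3P [/andP[->]|/andP[->]|/andP[-> _]] //; rewrite orbT.
have [c1 [c1b c1p]] := nbhd_col d t x pawf nK.
have [c2 [c2b c2p]] := nbhd_col d t y pawf nK.
exists (fun u => if e x u then c1 u else d * t + c2 u); split.
  move=> u uC; case: ifP => h.
    by apply: ltn_addr; apply: c1b; rewrite inE.
  rewrite ltn_add2l; apply: c2b; rewrite inE.
  by have := xy_adj u uC; rewrite h.
move=> u v uC vC uv; case: ifP => hu; case: ifP => hv.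
- by apply: c1p; rewrite ?inE.
- apply: contraTneq (c1b u _) => [->|]; last by rewrite inE.
  by rewrite -leqNgt leq_addr.
- apply: contraTneq (c1b v _) => [<-|]; last by rewrite inE.
  by rewrite -leqNgt leq_addr.
- rewrite eqn_add2l; apply: c2p; rewrite ?inE.
  + by have := xy_adj u uC; rewrite hu.
  + by have := xy_adj v vC; rewrite hv.
  exact: uv.
Qed.
End G2.


Lemma fin_choice (T : finType) (A : Type) (a0 : A) (P : T -> A -> Prop) :
  (forall x, exists a, P x a) -> exists f : T -> A, forall x, P x (f x).
Proof.
move=> H; have H2 : forall s : seq T, exists f : T -> A, forall x, x \in s -> P x (f x).
  elim=> [|y s [f hf]]; first by exists (fun _ => a0).
  have [ay hy] := H y; exists (fun x => if x == y then ay else f x) => x.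
  by rewrite inE; case: eqP => [-> _ //| _ /= xs]; exact: hf.
have [f hf] := H2 (enum T); exists f => x; apply: hf; by rewrite mem_enum.
Qed.

Section G3.
Variable V : finType.
Variable e : rel V.
Hypothesis es : symmetric e.
Hypothesis eirr : irreflexive e.
Variable p : nat.
Hypothesis hp : 3 <= p.
Hypothesis T1f : ~ induced_sub (T1 p) e.
Variable C : {set V}.
Hypothesis tfC : forall x, x \in C -> tfat V e x.
Ltac clr := repeat match goal with H : context [e] |- _ => clear H end.
Ltac mlia := clr; lia.

Definition resr (A : {set V}) : rel V := fun x y => [&& e x y, x \in A & y \in A].

Fixpoint Rset (w : V) (U : {set V}) (n : nat) : {set V} :=
  if n is n'.+1 then Rset w U n' :|: [set y in U | [exists x in Rset w U n', resr U x y]]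
  else [set w].

Lemma bfs (a : nat -> V) (S : {set V}) : ipath V e a p ->
  (forall j, j < p -> a j \notin S) ->
  (forall j s, j < p.-1 -> s \in S -> ~~ e (a j) s) -> S \subset C ->
  (forall s, s \in S -> connect (resr (a p.-1 |: S)) (a p.-1) s) -> colS V e S 4.
Proof.
move=> ap aS anb SC reach.
set w := a p.-1; set U := w |: S; set eU := resr U.
have wS : w \notin S by apply: aS; mlia.
have R_reach : forall n x, x \in Rset w U n -> connect eU w x.
  elim=> [|n IH] x /=; first by rewrite inE => /eqP ->.
  rewrite in_setU in_set => /orP [/IH //|/andP [_ /existsP [y /andP [yR yx]]]].
  exact: connect_trans (IH _ yR) (connect1 yx).
have reach_R : forall x, connect eU w x -> exists n, x \in Rset w U n.
  apply: connect_indP; first by exists 0; rewrite /= inE.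
  move=> u v [n hn] uv; exists n.+1; rewrite /= in_setU; apply/orP; right.
  rewrite in_set; move: (uv) => /and3P [_ _ ->] /=; apply/existsP; exists u; by rewrite hn.
have exd : forall x, exists n, (x \in Rset w U n) || ~~ connect eU w x.
  move=> x; case: (boolP (connect eU w x)) => h.
    by have [n hn] := reach_R x h; exists n; rewrite hn.
  by exists 0; apply/orP; right.
pose d x := ex_minn (exd x).
have dP : forall x, connect eU w x -> x \in Rset w U (d x).
  move=> x h; rewrite /d; case: ex_minnP => n /orP [//|/negP nh _]; by case: nh.
have dmin : forall x n, x \in Rset w U n -> d x <= n.
  move=> x n hn; rewrite /d; case: ex_minnP => m _; apply; by rewrite hn.
have dw : d w = 0 by apply/eqP; rewrite -leqn0; apply: dmin; rewrite /= inE.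
have rU : forall x, x \in U -> connect eU w x.
  move=> x; rewrite in_setU1 => /orP [/eqP ->|/reach //]; exact: connect0.
have lipU : forall u v, u \in U -> v \in U -> e u v -> d v <= (d u).+1.
  move=> u v uU vU uv; apply: dmin; rewrite /= in_setU; apply/orP; right.
  rewrite in_set vU /=; apply/existsP; exists u; rewrite dP ?rU //=.
  by rewrite /resr uv uU vU.
have far : forall u v, u \in U -> v \in U -> (d u).+2 <= d v -> ~~ e u v.
  move=> u v uU vU h; apply/negP => uv; have := lipU u v uU vU uv; mlia.
have dS : forall x, x \in U -> (x \in S) = (0 < d x).
  move=> x xU; case: (boolP (x \in S)) => xS.
    symmetry; rewrite lt0n; apply/eqP => h0; have := dP x (rU x xU); rewrite h0 /= inE.
    by move/eqP => E; rewrite E (negbTE wS) in xS.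
  by move: xU; rewrite in_setU1 (negbTE xS) orbF => /eqP ->; rewrite dw.
have parent : forall x, x \in U -> forall n, d x = n.+1 -> exists2 y, y \in U & e y x && (d y == n).
  move=> x xU n hd; have := dP x (rU x xU); rewrite hd /= in_setU => /orP [h|].
    by have := dmin x n h; rewrite hd ltnn.
  rewrite in_set => /andP [_ /existsP [y /andP [yR /and3P [yx yU _]]]].
  exists y => //; rewrite yx /=; have := dmin y n yR; have := lipU y x yU xU yx; mlia.
have SU : forall v, v \in S -> v \in U by move=> v vS; rewrite in_setU1 vS orbT.
pose cnd (b : nat -> V) x j := ((b j \notin S) && [forall s in S, ~~ e (b j) s]) ||
   ((b j \in U) && (d (b j) + (p.-1 - j) <= d x)).
have nadj : forall b x j v, cnd b x j -> v \in S -> d x + 2 <= d v + (p.-1 - j) -> ~~ e (b j) v.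
  move=> b x j v /orP [/andP [_ /forallP /(_ v) /implyP h] vS _|/andP [h1 h2] vS h3].
    exact: h.
  apply: far => //; first exact: SU.
  mlia.
have PiP : forall n x, x \in U -> d x = n ->
    exists b, [/\ ipath V e b p, b p.-1 = x & forall j, j < p.-1 -> cnd b x j].
  elim=> [|n IH] x xU hd.
    have xw : x = w by move: (dP x (rU x xU)); rewrite hd /= inE => /eqP.
    exists a; split; [exact: ap | by rewrite xw | ].
    move=> j hj; apply/orP; left; rewrite (aS j) /=; last mlia.
    apply/forallP => s; apply/implyP => sS; exact: anb.
  have [y yU /andP [yx /eqP dy]] := parent x xU n hd.
  have [b [[bE bI] by_ cb]] := IH y yU dy.
  have xS : x \in S by rewrite dS // hd.
  have key : forall i, i < p.-1 -> e (b i.+1) x = (i.+1 == p.-1).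
    move=> i hi; case: eqP => [E|/eqP ne]; first by rewrite E by_.
    apply/negbTE; apply: (nadj b y) => //; [apply: cb | ]. { move: ne hi; clear. mlia. } { move: ne hi hd dy; clear. mlia. }
  have neq : forall i, i < p.-1 -> b i.+1 != x.
    move=> i hi; apply/eqP => E; have := key i hi; rewrite E eirr => /esym/eqP ne.
    have := cb i.+1 (ltac:(mlia)); rewrite /cnd E xS /= => /andP [_]; rewrite hd; mlia.
  exists (fun j => if j < p.-1 then b j.+1 else x); split.
  + split.
    * move=> i j hi hj; case: (ltnP i p.-1) => hi'; case: (ltnP j p.-1) => hj'.
      - by rewrite bE; [rewrite !eqSS | mlia | mlia].
      - have jE : j = p.-1 by mlia.
        rewrite jE key //; mlia.
      - have iE : i = p.-1 by mlia.
        rewrite iE es key //; mlia.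
      - rewrite eirr; mlia.
    * move=> i j hi hj; case: (ltnP i p.-1) => hi'; case: (ltnP j p.-1) => hj'.
      - move=> E; have : i.+1 = j.+1 by apply: bI => //; mlia.
        by case.
      - by move=> E; move: (neq i hi'); rewrite E eqxx.
      - by move=> E; move: (neq j hj'); rewrite -E eqxx.
      - move=> _; mlia.
  + by rewrite ltnn.
  + move=> j hj; rewrite /cnd hj; case: (ltnP j.+1 p.-1) => hj2.
      move: (cb _ hj2); case/orP => [h|/andP [h1 h2]]; apply/orP; [by left | right].
      rewrite h1 /= hd; rewrite dy in h2; mlia.
    have jE : j.+1 = p.-1 by mlia.
    apply/orP; right; rewrite jE by_ yU dy hd /=; mlia.
have K : forall x x1 z x2, x \in S -> x1 \in S -> z \in S -> x2 \in S ->
    d x1 = d x -> d z = d x -> d x2 = d x -> e x x1 -> e x1 z -> z != x -> e x x2 -> e z x2.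
  move=> x x1 z x2 xS x1S zS x2S d1 dz d2 xx1 x1z zx xx2.
  case nz: (e z x2) => //; exfalso.
  have [b [[bE bI] bx cb]] := PiP _ x (SU x xS) erefl.
  have a0x : e (b p.-2) x by rewrite -bx bE; mlia.
  have [a0U da0] : b p.-2 \in U /\ (d (b p.-2)).+1 = d x.
    have := cb p.-2 (ltac:(mlia)); rewrite /cnd => /orP [/andP [_ /forallP /(_ x) /implyP /(_ xS)]|/andP [h1 h2]].
      by rewrite a0x.
    split => //; have := lipU _ _ h1 (SU x xS) a0x; mlia.
  set a0 := b p.-2 in a0x a0U da0.
  have dxpos : 0 < d x by rewrite -dS // SU.
  case za: (e z a0).
    have [b2 [[bE2 bI2] b2a cb2]] := PiP _ a0 a0U erefl.
    apply: T1f; apply: (@t1_found V e es eirr p b2 x z x2 hp).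
    - by split.
    - by rewrite b2a es.
    - by rewrite b2a.
    - exact: xx2.
    - by rewrite es nz.
    - rewrite b2a; apply/eqP => E; move: da0; rewrite -E d2; mlia.
    - move=> j hj; rewrite ![e _ (b2 j)]es; apply/and3P; split; apply: (nadj b2 a0 j) => //;
        (try by apply: cb2); mlia.
    - exact: tfC (subsetP SC x xS).
  apply: T1f; apply: (@t1_found V e es eirr p b x1 x2 z hp).
  - by split.
  - by rewrite bx es.
  - by rewrite bx es.
  - exact: x1z.
  - by rewrite nz.
  - by rewrite bx.
  - move=> j hj; case: (ltnP j p.-2) => hj2.
      apply/and3P; split; rewrite es; apply: (nadj b x j) => //; (try by apply: cb); mlia.
    have jE : j = p.-2 by mlia.
    rewrite jE -/a0; apply/and3P; split.
    + apply/negP => h; have := tfC x (subsetP SC x xS) a0 x1.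
      by rewrite xx1 es a0x es h => /(_ isT isT).
    + apply/negP => h; have := tfC x (subsetP SC x xS) a0 x2.
      by rewrite xx2 es a0x es h => /(_ isT isT).
    + by rewrite za.
  - exact: tfC (subsetP SC x1 x1S).
pose eL : rel V := fun u v => eU u v && (d u == d v).
have eLs : symmetric eL.
  move=> u v; rewrite /eL /= /eU /resr es eq_sym.
  by case: (u \in U); case: (v \in U); rewrite /= ?andbF.
have struct : forall r, r \in S -> forall y, connect eL r y ->
    [/\ y \in S, d y = d r & [\/ y = r, e r y |
       [/\ y != r, ~~ e r y, exists n, eL r n & forall n, eL r n -> e y n]]].
  move=> r rS; apply: connect_indP; first by split => //; constructor 1.
  move=> u v [uS du Qu] /andP [/and3P [uv uU vU] /eqP duv].
  have dv : d v = d r by rewrite -duv.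
  have vS : v \in S by rewrite dS // dv -dS ?SU.
  have inS : forall n, eL r n -> n \in S /\ d n = d r.
    move=> n /andP [/and3P [_ _ nU] /eqP drn]; split => //.
    by rewrite dS // -drn -dS ?SU.
  split => //.
  case: Qu => [Eu|ru|[ur nru [n0 rn0] cu]].
  - by constructor 2; rewrite -Eu.
  - case: (eqVneq v r) => [->|vr]; first by constructor 1.
    case rv: (e r v); first by constructor 2.
    constructor 3; split => //.
      exists u; by rewrite /eL /eU /resr ru SU // uU du eqxx.
    move=> n rn; have [nS dn] := inS n rn.
    apply: (K r u v n) => //; (by rewrite du) || (by rewrite dn) || (by case/andP: rn => /and3P[]).
  - case: (eqVneq v r) => [Ev|vr].
      by rewrite Ev es in uv; rewrite uv in nru.
    have [n0S dn0] := inS n0 rn0.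
    constructor 2; apply: (K u n0 r v) => //; try congruence.
    + exact: cu.
    + by case/andP: rn0 => /and3P [h _ _]; rewrite es.
    + by rewrite eq_sym.
exists (fun x => 2 * odd (d x) + e (fingraph.root eL x) x); split.
  by move=> x _; case: (odd _); case: (e _ _).
move=> x y xS yS xy.
have xU := SU x xS; have yU := SU y yS.
have h1 := lipU x y xU yU xy.
have h2 : d x <= (d y).+1 by apply: lipU => //; rewrite es.
case: (eqVneq (d x) (d y)) => [dxy|dxy]; last first.
  have : odd (d x) != odd (d y).
    have [E|E] : d y = (d x).+1 \/ d x = (d y).+1 by mlia.
      by rewrite E /=; case: odd.
    by rewrite E /=; case: odd.
  by case: (odd (d x)); case: (odd (d y)); case: (e _ x); case: (e _ y).
have cxy : connect eL x y by apply: connect1; rewrite /eL /eU /resr xy xU yU dxy eqxx.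
have rxy : fingraph.root eL x = fingraph.root eL y := elimT (fingraph.rootP (sym_connect_sym eLs)) cxy.
rewrite dxy rxy eqn_add2l; set r := fingraph.root eL y.
have cx : connect eL r x by rewrite (sym_connect_sym eLs) /r -rxy connect_root.
have cy : connect eL r y by rewrite (sym_connect_sym eLs) /r connect_root.
have cxr : connect eL x r by rewrite (sym_connect_sym eLs).
have [rS _ _] := struct x xS r cxr.
have tfr := tfC r (subsetP SC r rS).
have tfx := tfC x (subsetP SC x xS).
have [_ _ Qx] := struct r rS x cx; have [_ _ Qy] := struct r rS y cy.
case: Qx => [Ex|rx|[xr nrx [n0 rn0] cx0]].
- rewrite Ex eirr; case: Qy => [Ey|ry|[yr nry _ _]].
  + by rewrite Ex Ey eirr in xy.
  + by rewrite ry.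
  + by rewrite -Ex xy in nry.
- rewrite rx; case: Qy => [Ey|ry|[yr nry _ _]].
  + by rewrite Ey eirr.
  + by have := tfr x y rx xy; rewrite ry.
  + by rewrite (negbTE nry).
- rewrite (negbTE nrx); case: Qy => [Ey|ry|[yr nry _ cy0]].
  + by rewrite Ey es in xy; rewrite xy in nrx.
  + by rewrite ry.
  + have := tfx y n0 xy (cy0 n0 rn0); by rewrite cx0.
Qed.

Lemma gen m : forall k, k + m = p -> 0 < k -> forall (a : nat -> V) (S : {set V}),
  ipath V e a k -> (forall j, j < k -> a j \notin S) ->
  (forall j s, j < k.-1 -> s \in S -> ~~ e (a j) s) -> S \subset C ->
  (forall s, s \in S -> connect (resr (a k.-1 |: S)) (a k.-1) s) -> colS V e S (4 + m).
Proof.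
elim: m => [|m IH] k hk k0 a S ap aS anb SC reach.
  rewrite addn0 in hk; subst k; rewrite addn0; exact: (@bfs a S ap aS anb SC reach).
set w := a k.-1; set U := w |: S; set eU := resr U.
set N := [set s in S | e w s]; set D := S :\: N; set eD := resr D.
have wS : w \notin S by apply: aS; mlia.
have inv : forall v, connect eU w v -> [\/ v = w, v \in N |
    (v \in D) /\ exists n m0, [/\ n \in N, e n m0, m0 \in D & connect eD m0 v]].
  apply: connect_indP; first by constructor 1.
  move=> u v Qu /and3P [uv uU vU].
  have [->|vS] : v = w \/ v \in S.
    by move: vU; rewrite in_setU1 => /orP [/eqP|]; [left|right].
    by constructor 1.
  case vN: (v \in N); first by constructor 2.
  have vD : v \in D by rewrite in_setD vN vS.
  constructor 3; split => //.
  case: Qu => [Eu|uN|[uD [n [m0 [nN nm0 m0D cm0]]]]].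
  - by move: vN; rewrite in_set vS -Eu uv.
  - by exists u, v; split => //; exact: connect0.
  - exists n, m0; split => //; apply: connect_trans cm0 (connect1 _).
    by rewrite /eD /resr uv uD vD.
have DS : forall x, x \in D -> x \in S by move=> x; rewrite in_setD => /andP [].
have DN : forall x, x \in D -> x \notin N by move=> x; rewrite in_setD => /andP [].
have anc : forall r, r \in D -> exists n m0, [/\ n \in N, e n m0, m0 \in D & connect eD m0 r].
  move=> r rD; case: (inv r (reach r (DS r rD))) => [Er|rN|[_ //]].
    by move: (DS r rD); rewrite Er (negbTE wS).
  by move: (DN r rD); rewrite rN.
have eDs : symmetric eD.
  move=> u v; rewrite /eD /resr es; by case: (u \in D); case: (v \in D); rewrite /= ?andbF.
pose comp r := [set y | connect eD r y].
have compD : forall r y, r \in D -> connect eD r y -> y \in D.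
  move=> r y rD; apply: (@connect_indP V eD (fun y => y \in D) r) => // u v _ /and3P [_ _ vD]; exact: vD.
have colr : forall r, exists c : V -> nat, r \in D ->
    (forall x, x \in comp r -> c x < 4 + m) /\
    (forall x y, x \in comp r -> y \in comp r -> e x y -> c x != c y).
  move=> r; case: (boolP (r \in D)) => rD; last by exists (fun _ => 0).
  have [n [m0 [nN nm0 m0D cm0]]] := anc r rD.
  move: nN; rewrite in_set => /andP [nS wn].
  pose a' j := if j < k then a j else n.
  have ha : forall i, i < k -> e (a i) n = (i.+1 == k).
    move=> i hi; case: (ltnP i.+1 k) => h.
      by rewrite (negbTE (anb i n _ nS)); [symmetry; apply/eqP; mlia | mlia].
    have iE : i = k.-1 by mlia.
    by rewrite iE -/w wn; symmetry; apply/eqP; mlia.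
  have compS : forall y, y \in comp r -> y \in D by move=> y; rewrite in_set; exact: compD.
  have [c [cb cp]] : colS V e (comp r) (4 + m).
    apply: (IH k.+1 _ _ a') => /=.
    - by rewrite addSnnS.
    - done.
    - split.
        move=> i j hi hj; rewrite /a'.
        case: (ltnP i k) => hi'; case: (ltnP j k) => hj' /=.
        + by case: ap => E _; apply: E.
        + have jE : j = k by mlia.
          by rewrite jE ha //; mlia.
        + have iE : i = k by mlia.
          by rewrite iE es ha //; mlia.
        + by rewrite eirr; mlia.
      move=> i j hi hj; rewrite /a'.
      case: (ltnP i k) => hi'; case: (ltnP j k) => hj' /=.
      + by case: ap => _; apply.
      + by move=> E; move: (aS i hi'); rewrite E nS.
      + by move=> E; move: (aS j hj'); rewrite -E nS.
      + move=> _; mlia.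
    - move=> j hj; rewrite /a'; case: ifP => hj'.
        by apply: contra (aS j hj') => /compS /DS.
      by apply/negP => /compS /DN; rewrite in_set nS wn.
    - move=> j s hj /compS sD; rewrite /a' hj.
      case: (ltnP j k.-1) => hj2; first exact: anb hj2 (DS s sD).
      have jE : j = k.-1 by mlia.
      by rewrite jE -/w; move: (DN s sD); rewrite in_set (DS s sD).
    - apply/subsetP => y /compS /DS ys; exact: (subsetP SC).
    - move=> s sc; rewrite /a' ltnn.
      have m0c : m0 \in comp r by rewrite in_set (sym_connect_sym eDs).
      have : connect eD m0 s by apply: connect_trans (_ : connect eD m0 r) _ => //; rewrite in_set in sc.
      move/(@connect_indP V eD (fun y => y \in comp r /\ connect (resr (n |: comp r)) n y) m0).
      case.
      + split => //; apply: connect1; by rewrite /resr nm0 !in_setU1 eqxx m0c orbT.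
      + move=> u v [uc cu] /and3P [uv uD vD]; have vc : v \in comp r.
          have cru : connect eD r u by rewrite in_set in uc.
          by rewrite in_set; apply: connect_trans cru (connect1 _); rewrite /eD /resr uv uD vD.
        split => //; apply: connect_trans cu (connect1 _).
        by rewrite /resr uv !in_setU1 uc vc !orbT.
      + by [].
  by exists c.
have [F HF] := @fin_choice V (V -> nat) (fun _ => 0) _ colr.
have rootD : forall x, x \in D -> fingraph.root eD x \in D /\ x \in comp (fingraph.root eD x).
  move=> x xD; have cx := connect_root eD x; split; first exact: compD cx.
  by rewrite in_set (sym_connect_sym eDs).
exists (fun x => if x \in N then 0 else (F (fingraph.root eD x) x).+1); split.
  move=> x xS; case: ifP => xN //.
  have xD : x \in D by rewrite in_setD xN xS.
  have [rD xc] := rootD x xD; have [hb _] := HF _ rD.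
  by rewrite addnS ltnS hb.
move=> x y xS yS xy; case: ifP => xN; case: ifP => yN //.
  move: xN yN; rewrite !in_set => /andP [_ wx] /andP [_ wy].
  have h := tfC x (subsetP SC x xS) w y; have exw : e x w by rewrite es.
  by move: (h exw wy); rewrite xy.
have xD : x \in D by rewrite in_setD xN xS.
have yD : y \in D by rewrite in_setD yN yS.
have cxy : connect eD x y by apply: connect1; rewrite /eD /resr xy xD yD.
have rxy := elimT (fingraph.rootP (sym_connect_sym eDs)) cxy.
rewrite rxy eqSS; have [rD yc] := rootD y yD; have [_ xc] := rootD x xD.
rewrite rxy in xc; have [_ hp2] := HF _ rD; exact: hp2.
Qed.
End G3.


Lemma main_col (V : finType) (e : rel V) p d t : 3 <= p -> simple_graph e ->
  ~ induced_sub paw e -> ~ induced_sub (T1 p) e -> ~ contains_Kdt d t e ->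
  chi e <= 4 + p + (d * t + d * t).
Proof.
move=> hp [es eirr] pf tf nK.
set K := 4 + p + (d * t + d * t).
pose Cr r := [set y | connect e r y].
have colC : forall r, colS V e (Cr r) K.
  move=> r; have rC : r \in Cr r by rewrite in_set connect0.
  case: (boolP [forall x in Cr r, [forall y, [forall z, ~~ [&& e x y, e y z & e x z]]]]) => h.
    have tfC : forall x, x \in Cr r -> tfat V e x.
      move/forall_inP: h => h x xC y z xy yz; apply/negP => xz.
      by move: (h x xC) => /forallP /(_ y) /forallP /(_ z); rewrite xy yz xz.
    have [c [cb cp]] : colS V e (Cr r :\ r) (4 + (p - 1)).
      apply: (@gen V e es eirr p hp tf (Cr r) tfC (p - 1) 1 _ _ (fun _ => r)).
      - lia.
      - done.
      - by split; move=> [|i] [|j] //= _ _; rewrite eirr.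
      - by move=> j _; rewrite in_setD1 eqxx.
      - by [].
      - exact: subsetDl.
      - move=> s; rewrite /= setD1K // in_setD1 => /andP [_].
        rewrite in_set; move/(@connect_indP V e (fun v => v \in Cr r /\ connect (resr V e (Cr r)) r v) r).
        case.
        + by split => //; exact: connect0.
        + move=> u v [uC cu] uv; have vC : v \in Cr r.
            by move: uC; rewrite /Cr !in_set => uC; exact: connect_trans uC (connect1 uv).
          split => //; apply: connect_trans cu (connect1 _).
          by rewrite /resr uv uC vC.
        + by [].
    exists (fun x => if x == r then 4 + (p - 1) else c x); split.
      move=> x xC; case: eqP => [_|/eqP xr]; first by rewrite /K; lia.
      have := cb x; rewrite in_setD1 xr xC => /(_ isT); rewrite /K; lia.
    move=> x y xC yC xy; case: (eqVneq x r) => [xr|xr]; case: (eqVneq y r) => [yr|yr].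
    - by rewrite xr yr eirr in xy.
    - have := cb y; rewrite in_setD1 yr yC => /(_ isT) h2; apply/eqP => E; lia.
    - have := cb x; rewrite in_setD1 xr xC => /(_ isT) h2; apply/eqP => E; lia.
    - by apply: cp; rewrite ?in_setD1 ?xr ?yr ?xC ?yC.
  case/forall_inPn: h => x xC /forallPn [y /forallPn [z /negPn /and3P [xy yz xz]]].
  have [c [cb cp]] : colS V e (Cr r) (d * t + d * t).
    apply: (@tri_comp V e es eirr d t (Cr r) x y z pf nK xy yz xz).
    move=> u; rewrite /Cr !in_set in xC * => uC.
    by apply: connect_trans _ uC; rewrite (sym_connect_sym es).
  exists c; split => //; move=> u uC; apply: leq_trans (cb u uC) _; rewrite /K; lia.
have [F HF] := @fin_choice V (V -> nat) (fun _ => 0) _ colC.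
have inC : forall x, x \in Cr (fingraph.root e x).
  by move=> x; rewrite in_set (sym_connect_sym es) connect_root.
have bnd : forall x, F (fingraph.root e x) x < K.
  by move=> x; have [hb _] := HF (fingraph.root e x); exact: hb.
have colK : colorable e K.
  apply/existsP; exists [ffun x => Ordinal (bnd x)].
  apply/forallP => x; apply/forallP => y; apply/implyP => xy; rewrite !ffunE.
  have rxy := elimT (fingraph.rootP (sym_connect_sym es)) (connect1 xy).
  rewrite -val_eqE /=; have [_ hp2] := HF (fingraph.root e x).
  rewrite -rxy; apply: hp2 => //.
  rewrite rxy; exact: inC.
rewrite /chi; destruct (boolP [forall x, ~~ e x x]) as [h|h] => //.
by case: ex_minnP => m _; apply.
Qed.

Local Open Scope ring_scope.

Theorem theorem8 :
  forall p : nat, (4 <= p)%N ->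
  forall d : nat, (1 <= d)%N ->
  exists f : {poly int},
  forall t : nat, (1 <= t)%N ->
  forall (V : finType) (e : rel V),
    simple_graph e ->
    H_free paw e ->
    H_free (T1 p) e ->
    ~ contains_Kdt d t e ->
    ((chi e)%:Z <= f.[t%:Z])%R.
Proof.
move=> p hp d hd; exists (((4 + p)%N%:Z)%:P + ((2 * d)%N%:Z)%:P * 'X) => t ht V e sg pf tf nK.
have h := @main_col V e p d t (ltnW hp) sg pf tf nK.
rewrite !hornerE -PoszM -PoszD lez_nat.
apply: (leq_trans h); by rewrite -mulnA mul2n -addnn.
Qed.
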